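(* In the algebra $\mathcal A$, the quantum superdeterminant $\mathcal D_h = a d^{-1} - \beta d^{-1}\gamma d^{-1}$ commutes with each of the generators $a,\beta,\gamma,d$.
   Context: Let $h$ be an odd (Grassmann) parameter with $h^2=0$. Throughout, even elements commute with everything and odd elements anticommute with each other. Let $\mathcal A$ be the associative $\mathbb Z_2$-graded algebra generated by even invertible elements $a,d$ and odd elements $\beta,\gamma$ (with $h$ commuting with $a,d$ and anticommuting with $\beta,\gamma$), subject to the relations $a\beta=\beta a$, $a\gamma=\gamma a+h a^2(1-\mathcal D_h^{-1})$, $d\beta=\beta d$, $d\gamma=\gamma d+h d^2(\mathcal D_h-1)$, $\beta^2=0$, $\gamma^2=h\gamma d(1-\mathcal D_h)$, $\beta\gamma=-\gamma\beta+h\beta d(1-\mathcal D_h)$, $ad=da+h\beta d(\mathcal D_h-1)$, where $\mathcal D_h=ad^{-1}-\beta d^{-1}\gamma d^{-1}$ is assumed invertible. This algebra is called the quantum supergroup $GL_h(1|1)$, with $T=\begin{pmatrix} a&\beta\\ \gamma& d\end{pmatrix}$. *)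

(* Defs.v *)
From HB Require Import structures.
From mathcomp Require Import all_boot all_order all_algebra.
Set Implicit Arguments. Unset Strict Implicit. Unset Printing Implicit Defensive.
Import GRing.Theory.
Local Open Scope ring_scope.

Definition qsdet (R : unitRingType) (a beta gamma d : R) : R :=
  a * d^-1 - beta * d^-1 * gamma * d^-1.

(* The defining relations of GL_h(1|1), with h the odd Grassmann parameter,
   holding for elements a beta gamma d h of a ring R. *)
Definition GLh11_rel (R : unitRingType) (h a beta gamma d : R) : Prop :=
  let D := qsdet a beta gamma d in
  [/\ [/\ a \is a GRing.unit, d \is a GRing.unit & D \is a GRing.unit],
      [/\ h * h = 0, h * a = a * h, h * d = d * h,
          h * beta = - (beta * h) & h * gamma = - (gamma * h)],
      [/\ a * beta = beta * a,
          a * gamma = gamma * a + h * a ^+ 2 * (1 - D^-1),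
          d * beta = beta * d,
          d * gamma = gamma * d + h * d ^+ 2 * (D - 1) &
          a * d = d * a + h * beta * d * (D - 1)] &
      [/\ beta * beta = 0,
          gamma * gamma = h * gamma * d * (1 - D) &
          beta * gamma = - (gamma * beta) + h * beta * d * (1 - D)]].

(* Main.v *)
Require Import Defs.
From Stdlib Require Import Ncring Ncring_tac.
From HB Require Import structures.
From mathcomp Require Import all_boot all_order all_algebra.
Import GRing.Theory.
Local Open Scope ring_scope.

#[local] Instance Rops (R : ringType) : @Ring_ops R 0%R 1%R (@GRing.add R) (@GRing.mul R) (fun x y => x - y)%R (@GRing.opp R) (@eq R) := {}.
#[local] Instance Rring (R : ringType) : @Ring R 0%R 1%R (@GRing.add R) (@GRing.mul R) (fun x y => x - y)%R (@GRing.opp R) (@eq R) (Rops R).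
Proof.
split; try by (try apply: eq_equivalence); (try by move=> x y -> z w ->); (try by move=> x y ->).
all: rewrite /eq_notation /add_notation /mul_notation /zero_notation /one_notation /opp_notation /=.
- exact: add0r.
- exact: addrC.
- exact: addrA.
- exact: mul1r.
- exact: mulr1.
- exact: mulrA.
- exact: mulrDl.
- move=> x y z; exact: mulrDr.
- move=> x; exact: subrr.
Qed.

Lemma comm_inv2 {R: ringType} {d g x : R} : g * d = 1 -> d * g = 1 -> d*x = x*d -> g * x = x * g.
Proof.
move=> gd dg e. by rewrite -[g * x]mulr1 -dg mulrA -(mulrA g) -e mulrA gd mul1r.
Qed.

Lemma key (R : unitRingType) (h a beta gamma d g D : R) :
  D \is a GRing.unit -> g * d = 1 -> d * g = 1 ->
  D = a * g - beta * g * gamma * g ->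
  h*h = 0 -> h*a = a*h -> h*d = d*h -> h*beta = -(beta*h) -> h*gamma = -(gamma*h) ->
  a*beta = beta*a -> a*gamma = gamma*a + h*a^+2*(1 - D^-1) -> d*beta = beta*d ->
  d*gamma = gamma*d + h*d^+2*(D-1) -> a*d = d*a + h*beta*d*(D-1) ->
  beta*beta = 0 -> gamma*gamma = h*gamma*d*(1-D) -> beta*gamma = -(gamma*beta) + h*beta*d*(1-D) ->
  [/\ D*a = a*D, D*beta = beta*D, D*gamma = gamma*D & D*d = d*D].
Proof.
move=> uD gd dg DE hh ha hd hb hc ab ac db dc ad bb cc bc.
have gb : g * beta = beta * g := comm_inv2 gd dg db.
have gh : g * h = h * g := comm_inv2 gd dg (esym hd).
have cd : gamma * d = d * gamma - h * d ^+ 2 * (D - 1) by rewrite dc addrK.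
have z_hh : (h * h - (0)) = 0.
  apply/eqP; rewrite subr_eq0; apply/eqP.
  exact: hh.
have z_bb : (beta * beta - (0)) = 0.
  apply/eqP; rewrite subr_eq0; apply/eqP.
  exact: bb.
have z_gd : (g * d - ((1))) = 0.
  apply/eqP; rewrite subr_eq0; apply/eqP.
  exact: gd.
have z_dg : (d * g - ((1))) = 0.
  apply/eqP; rewrite subr_eq0; apply/eqP.
  exact: dg.
have z_gb : (g * beta - ((beta * g))) = 0.
  apply/eqP; rewrite subr_eq0; apply/eqP.
  exact: gb.
have z_gh : (g * h - ((h * g))) = 0.
  apply/eqP; rewrite subr_eq0; apply/eqP.
  exact: gh.
have z_bh : (beta * h - (- (h * beta))) = 0.
  apply/eqP; rewrite subr_eq0; apply/eqP.
  by rewrite hb opprK.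
have z_ch : (gamma * h - (- (h * gamma))) = 0.
  apply/eqP; rewrite subr_eq0; apply/eqP.
  by rewrite hc opprK.
have z_ah : (a * h - ((h * a))) = 0.
  apply/eqP; rewrite subr_eq0; apply/eqP.
  by rewrite ha.
have z_dh : (d * h - ((h * d))) = 0.
  apply/eqP; rewrite subr_eq0; apply/eqP.
  by rewrite hd.
have z_ab : (a * beta - ((beta * a))) = 0.
  apply/eqP; rewrite subr_eq0; apply/eqP.
  exact: ab.
have z_db : (d * beta - ((beta * d))) = 0.
  apply/eqP; rewrite subr_eq0; apply/eqP.
  exact: db.
have z_da : (d * a - ((a * d) + (h * beta * d) - (h * beta * d * D))) = 0.
  apply/eqP; rewrite subr_eq0; apply/eqP.
  by rewrite ad; non_commutative_ring.
have z_dc : (d * gamma - ((gamma * d) - (h * d * d) + (h * d * d * D))) = 0.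
  apply/eqP; rewrite subr_eq0; apply/eqP.
  by rewrite dc expr2; non_commutative_ring.
have z_cb : (gamma * beta - (- (beta * gamma) + (h * beta * d) - (h * beta * d * D))) = 0.
  apply/eqP; rewrite subr_eq0; apply/eqP.
  by rewrite bc; non_commutative_ring.
have z_cc : (gamma * gamma - ((h * gamma * d) - (h * gamma * d * D))) = 0.
  apply/eqP; rewrite subr_eq0; apply/eqP.
  by rewrite cc; non_commutative_ring.
have z_ca : (gamma * a - ((a * gamma) - (h * a * a) + (h * a * a * D^-1))) = 0.
  apply/eqP; rewrite subr_eq0; apply/eqP.
  by rewrite ac expr2; non_commutative_ring.
have z_DE : (D - ((a * g) - (beta * g * gamma * g))) = 0.
  apply/eqP; rewrite subr_eq0; apply/eqP.
  exact: DE.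
have z_ga : (g * a - ((a * g) + (h * beta * D * g) - (h * beta * g))) = 0.
  apply/eqP; rewrite subr_eq0; apply/eqP.
  transitivity (g * (a * d) * g); first by rewrite -!mulrA dg mulr1.
  rewrite ad.
  apply/eqP; rewrite -subr_eq0; apply/eqP.
  have E : g * (d * a + h * beta * d * (D - 1)) * g - ((a * g) + (h * beta * D * g) - (h * beta * g)) = ((g * d - ((1))) * a * g) + ((g * h - ((h * g))) * beta * d * D * g) - ((g * h - ((h * g))) * beta * d * g) + (h * (g * beta - ((beta * g))) * d * D * g) + (h * beta * (g * d - ((1))) * D * g) - (h * (g * beta - ((beta * g))) * d * g) - (h * beta * (g * d - ((1))) * g) by non_commutative_ring.
  rewrite E ?z_gb ?z_gd ?z_gh.
  by rewrite ?mulr0 ?mul0r ?oppr0 ?addr0 ?add0r ?subr0.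
have z_gc : (g * gamma - ((gamma * g) - (h * d * D * g) + (h * d * g))) = 0.
  apply/eqP; rewrite subr_eq0; apply/eqP.
  transitivity (g * (gamma * d) * g); first by rewrite -!mulrA dg mulr1.
  rewrite cd expr2.
  apply/eqP; rewrite -subr_eq0; apply/eqP.
  have E : g * (d * gamma - h * (d * d) * (D - 1)) * g - ((gamma * g) - (h * d * D * g) + (h * d * g)) = ((g * d - ((1))) * gamma * g) - ((g * h - ((h * g))) * d * d * D * g) + ((g * h - ((h * g))) * d * d * g) - (h * (g * d - ((1))) * d * D * g) + (h * (g * d - ((1))) * d * g) by non_commutative_ring.
  rewrite E ?z_gd ?z_gh.
  by rewrite ?mulr0 ?mul0r ?oppr0 ?addr0 ?add0r ?subr0.
have Dd : D * d = d * D.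
  apply/eqP; rewrite -subr_eq0; apply/eqP.
  have E : D * d - (d * D) = ((D - ((a * g) - (beta * g * gamma * g))) * d) - (d * (D - ((a * g) - (beta * g * gamma * g)))) + (a * (g * d - ((1)))) - (beta * g * gamma * (g * d - ((1)))) - (beta * (g * gamma - ((gamma * g) - (h * d * D * g) + (h * d * g)))) + ((beta * h - (- (h * beta))) * d * D * g) - (beta * h * (d * g - ((1)))) - ((beta * h - (- (h * beta)))) - ((d * a - ((a * d) + (h * beta * d) - (h * beta * d * D))) * g) - (a * (d * g - ((1)))) + ((d * beta - ((beta * d))) * g * gamma * g) + (beta * (d * g - ((1))) * gamma * g) - (h * beta * (d * g - ((1)))) by non_commutative_ring.
  rewrite E ?z_DE ?z_bh ?z_da ?z_db ?z_dg ?z_gc ?z_gd.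
  by rewrite ?mulr0 ?mul0r ?oppr0 ?addr0 ?add0r ?subr0.
have Db : D * beta = beta * D.
  apply/eqP; rewrite -subr_eq0; apply/eqP.
  have E : D * beta - (beta * D) = ((D - ((a * g) - (beta * g * gamma * g))) * beta) - (beta * (D - ((a * g) - (beta * g * gamma * g)))) + (a * (g * beta - ((beta * g)))) + ((a * beta - ((beta * a))) * g) + ((beta * beta - (0)) * g * gamma * g) - (beta * g * gamma * (g * beta - ((beta * g)))) - (beta * (g * gamma - ((gamma * g) - (h * d * D * g) + (h * d * g))) * beta * g) - (beta * gamma * (g * beta - ((beta * g))) * g) - (beta * (gamma * beta - (- (beta * gamma) + (h * beta * d) - (h * beta * d * D))) * g * g) + ((beta * beta - (0)) * gamma * g * g) + ((beta * h - (- (h * beta))) * beta * d * D * g * g) - (beta * h * beta * (d * g - ((1))) * g) - ((beta * h - (- (h * beta))) * beta * g) - ((beta * h - (- (h * beta))) * beta * g) + (beta * h * d * D * (g * beta - ((beta * g))) * g) + ((beta * h - (- (h * beta))) * d * D * beta * g * g) - (beta * h * (d * g - ((1))) * beta * g) - (h * (beta * beta - (0)) * d * D * g * g) + (h * (beta * beta - (0)) * g) + (h * (beta * beta - (0)) * g) - (h * beta * d * (D - ((a * g) - (beta * g * gamma * g))) * beta * g * g) - (h * beta * d * a * (g * beta - ((beta * g))) * g * g) - (h * beta * d * (a * beta - ((beta * a))) * g * g * g) - (h * beta * (d * beta - ((beta * d))) * a * g * g * g) - (h * (beta * beta - (0)) * d * a * g * g * g) + (h * beta * d * beta * g * gamma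 * (g * beta - ((beta * g))) * g * g) + (h * beta * (d * beta - ((beta * d))) * g * gamma * beta * g * g * g) + (h * (beta * beta - (0)) * d * g * gamma * beta * g * g * g) by non_commutative_ring.
  rewrite E ?z_DE ?z_ab ?z_bb ?z_bh ?z_cb ?z_db ?z_dg ?z_gb ?z_gc.
  by rewrite ?mulr0 ?mul0r ?oppr0 ?addr0 ?add0r ?subr0.
have hbad : h * beta * a * d * D = h * beta * a * a.
  apply/eqP; rewrite -subr_eq0; apply/eqP.
  have E : h * beta * a * d * D - (h * beta * a * a) = (h * beta * a * d * (D - ((a * g) - (beta * g * gamma * g)))) + (h * beta * a * (d * a - ((a * d) + (h * beta * d) - (h * beta * d * D))) * g) + (h * beta * a * a * (d * g - ((1)))) - (h * beta * a * (d * beta - ((beta * d))) * g * gamma * g) - (h * beta * a * beta * (d * g - ((1))) * gamma * g) - (h * beta * (a * beta - ((beta * a))) * gamma * g) - (h * beta * (a * h - ((h * a))) * beta * d * D * g) + (h * beta * a * h * beta * (d * g - ((1)))) + (h * beta * (a * h - ((h * a))) * beta) - (h * (beta * beta - (0)) * a * gamma * g) + (h * (beta * h - (- (h * beta))) * a * beta) - (h * (beta * h - (- (h * beta))) * a * beta * d * D * g) - ((h * h - (0)) * beta * a * beta) + ((h * h - (0)) * beta * a * beta * d * D * g) by non_commutative_ring.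
  rewrite E ?z_DE ?z_ab ?z_ah ?z_bb ?z_bh ?z_da ?z_db ?z_dg ?z_hh.
  by rewrite ?mulr0 ?mul0r ?oppr0 ?addr0 ?add0r ?subr0.
have hbaaV : h * beta * a * a * D^-1 = h * beta * a * d by rewrite -hbad mulrK.
have z_hbaaV : (h * beta * a * a * D^-1 - ((h * beta * a * d))) = 0.
  apply/eqP; rewrite subr_eq0; apply/eqP.
  exact: hbaaV.
have haa : (h * a * d + h * beta * gamma) * D = h * a * a.
  apply/eqP; rewrite -subr_eq0; apply/eqP.
  have E : (h * a * d + h * beta * gamma) * D - (h * a * a) = (h * a * d * (D - ((a * g) - (beta * g * gamma * g)))) + (h * beta * gamma * (D - ((a * g) - (beta * g * gamma * g)))) + (h * a * (d * a - ((a * d) + (h * beta * d) - (h * beta * d * D))) * g) + (h * a * a * (d * g - ((1)))) - (h * a * (d * beta - ((beta * d))) * g * gamma * g) - (h * a * beta * (d * g - ((1))) * gamma * g) - (h * (a * beta - ((beta * a))) * gamma * g) - (h * (a * h - ((h * a))) * beta * d * D * g) + (h * a * h * beta * (d * g - ((1)))) + (h * (a * h - ((h * a))) * beta) + (h * beta * (gamma * a - ((a * gamma) - (h * a * a) + (h * a * a * D^-1))) * g) - (h * beta * gamma * beta * (g * gamma - ((gamma * g) - (h * d * D * g) + (h * d * g))) * g) - (h * beta * (gamma * beta - (- (beta * gamma) + (h * beta * d) - (h * beta * d * D))) * gamma * g * g) + (h * (beta * beta - (0)) * gamma * gamma * g * g) + (h * beta * gamma * (beta * h - (- (h * beta)))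 * d * D * g * g) - (h * beta * gamma * beta * h * (d * g - ((1))) * g) - (h * beta * gamma * (beta * h - (- (h * beta))) * g) - (h * beta * (gamma * h - (- (h * gamma))) * beta * d * D * g * g) + (h * beta * (gamma * h - (- (h * gamma))) * beta * g) + (h * (beta * h - (- (h * beta))) * a * a * D^-1 * g) - (h * (beta * h - (- (h * beta))) * a * a * g) + (h * (beta * h - (- (h * beta))) * beta * d * D * gamma * g * g) - (h * (beta * h - (- (h * beta))) * beta * d * gamma * g * g) + (h * (beta * h - (- (h * beta))) * gamma * beta * d * D * g * g) - (h * (beta * h - (- (h * beta))) * gamma * beta * g) + ((h * h - (0)) * a * beta) - ((h * h - (0)) * a * beta * d * D * g) - ((h * h - (0)) * beta * a * a * D^-1 * g) + ((h * h - (0)) * beta * a * a * g) - ((h * h - (0)) * beta * beta * d * D * gamma * g * g) + ((h * h - (0)) * beta * beta * d * gamma * g * g) - ((h * h - (0)) * beta * gamma * beta * d * D * g * g) + ((h * h - (0)) * beta * gamma * beta * g) by non_commutative_ring.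
  rewrite E ?z_DE ?z_ab ?z_ah ?z_bb ?z_bh ?z_ca ?z_cb ?z_ch ?z_da ?z_db ?z_dg ?z_gc ?z_hh.
  by rewrite ?mulr0 ?mul0r ?oppr0 ?addr0 ?add0r ?subr0.
have haaV : h * a * a * D^-1 = h * a * d + h * beta * gamma by rewrite -haa mulrK.
have z_haaV : (h * a * a * D^-1 - ((h * a * d) + (h * beta * gamma))) = 0.
  apply/eqP; rewrite subr_eq0; apply/eqP.
  exact: haaV.
have Da : D * a = a * D.
  apply/eqP; rewrite -subr_eq0; apply/eqP.
  have E : D * a - (a * D) = ((D - ((a * g) - (beta * g * gamma * g))) * a) - (a * (D - ((a * g) - (beta * g * gamma * g)))) + ((a * beta - ((beta * a))) * g * gamma * g) + (a * (g * a - ((a * g) + (h * beta * D * g) - (h * beta * g)))) + ((a * h - ((h * a))) * beta * D * g) - ((a * h - ((h * a))) * beta * g) + (beta * a * (g * gamma - ((gamma * g) - (h * d * D * g) + (h * d * g))) * g) - (beta * (a * h - ((h * a))) * d * D * g * g) + (beta * a * h * (d * g - ((1))) * g) + (beta * (a * h - ((h * a))) * g) - (beta * g * gamma * (g * a - ((a * g) + (h * beta * D * g) - (h * beta * g)))) - (beta * (g * gamma - ((gamma * g) - (h * d * D * g) + (h * d * g))) * a * g) - (beta * gamma * (g * a - ((a * g) + (h * beta * D * g) - (h * beta * g))) * g) - (beta * (gamma * a - ((a * gamma) - (h * a * a) + (h * a * a * D^-1))) * g * g) - (beta * (gamma * h - (- (h * gamma))) * beta * D * g * g) + (beta * (gamma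 * h - (- (h * gamma))) * beta * g * g) - (beta * g * (gamma * h - (- (h * gamma))) * beta * D * g) + (beta * g * (gamma * h - (- (h * gamma))) * beta * g) + (beta * (g * h - ((h * g))) * gamma * beta * D * g) - (beta * (g * h - ((h * g))) * gamma * beta * g) - ((beta * h - (- (h * beta))) * a * a * D^-1 * g * g) + ((beta * h - (- (h * beta))) * a * a * g * g) - ((beta * h - (- (h * beta))) * a * d * D * g * g) + ((beta * h - (- (h * beta))) * gamma * beta * D * g * g) - ((beta * h - (- (h * beta))) * gamma * beta * g * g) + ((beta * h - (- (h * beta))) * d * D * g * a * g) - (beta * h * (d * g - ((1))) * a * g) + ((beta * h - (- (h * beta))) * g * gamma * beta * D * g) - ((beta * h - (- (h * beta))) * g * gamma * beta * g) + (h * (a * beta - ((beta * a))) * D * g) - (h * (a * beta - ((beta * a))) * g) + (h * beta * a * (D - ((a * g) - (beta * g * gamma * g))) * g) + ((h * beta * a * a * D^-1 - ((h * beta * a * d))) * g * g) - (h * beta * (a * beta - ((beta * a))) * g * gamma * g * g) + (h * beta * a * d * (D - ((a * g) - (beta * g * gamma * g))) * g * g) + (h * beta * a * (d * a - ((a * d) + (h * beta * d) - (h * beta * d * D))) * g * g * g) + (h * beta * a * a * (d * g - ((1))) * g * g) - (h * beta * a * (d * beta - ((beta * d))) * g * gamma * g * g * g) - (h * beta * a * beta * (d * g - ((1))) * gamma * g * g * g) - (h * beta * (a * beta - ((beta * a))) * gamma * g * g * g) + (h * beta * a * (d * g - ((1))) * g) - (h * beta * (a * h - ((h * a))) * beta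 * d * D * g * g * g) + (h * beta * a * h * beta * (d * g - ((1))) * g * g) + (h * beta * (a * h - ((h * a))) * beta * g * g) - (h * (beta * beta - (0)) * a * gamma * g * g * g) - (h * (beta * beta - (0)) * a * g * gamma * g * g) - (h * beta * (gamma * beta - (- (beta * gamma) + (h * beta * d) - (h * beta * d * D))) * D * g * g) + (h * (beta * beta - (0)) * gamma * D * g * g) + (h * beta * (gamma * beta - (- (beta * gamma) + (h * beta * d) - (h * beta * d * D))) * g * g) + (h * beta * (gamma * beta - (- (beta * gamma) + (h * beta * d) - (h * beta * d * D))) * g * g) - (h * (beta * beta - (0)) * gamma * g * g) - (h * (beta * beta - (0)) * gamma * g * g) - (h * beta * d * D * (g * a - ((a * g) + (h * beta * D * g) - (h * beta * g))) * g) - (h * beta * d * (D - ((a * g) - (beta * g * gamma * g))) * a * g * g) - (h * beta * d * (D - ((a * g) - (beta * g * gamma * g))) * h * beta * D * g * g) + (h * beta * d * (D - ((a * g) - (beta * g * gamma * g))) * h * beta * g * g) - (h * beta * (d * a - ((a * d) + (h * beta * d) - (h * beta * d * D))) * g * a * g * g) - (h * beta * a * (d * g - ((1))) * a * g * g) - (h * beta * d * a * (g * h - ((h * g))) * beta * D * g * g) + (h * beta * d * a * (g * h - ((h * g))) * beta * g * g) - (h * beta * d * a * h * (g * beta - ((beta * g))) * D * g * g) - (h * beta * d * (a * h - ((h * a))) * beta * g * D * g * g) + (h * beta * d * a * h * (g * beta - ((beta * g))) * g * g) + (h * beta * d * (a * h - ((h * a))) * beta * g * g * g) + (h * beta * (d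 * beta - ((beta * d))) * g * gamma * g * a * g * g) + (h * (beta * beta - (0)) * d * g * gamma * g * a * g * g) + (h * beta * d * beta * g * gamma * (g * h - ((h * g))) * beta * D * g * g) - (h * beta * d * beta * g * gamma * (g * h - ((h * g))) * beta * g * g) + (h * beta * d * beta * g * gamma * h * (g * beta - ((beta * g))) * D * g * g) + (h * beta * d * beta * g * (gamma * h - (- (h * gamma))) * beta * g * D * g * g) - (h * beta * d * beta * g * gamma * h * (g * beta - ((beta * g))) * g * g) - (h * beta * d * beta * g * (gamma * h - (- (h * gamma))) * beta * g * g * g) - (h * beta * d * beta * (g * h - ((h * g))) * gamma * beta * g * D * g * g) + (h * beta * d * beta * (g * h - ((h * g))) * gamma * beta * g * g * g) - (h * beta * d * (beta * h - (- (h * beta))) * g * gamma * beta * g * D * g * g) + (h * beta * d * (beta * h - (- (h * beta))) * g * gamma * beta * g * g * g) - (h * beta * (d * h - ((h * d))) * a * beta * g * D * g * g) + (h * beta * (d * h - ((h * d))) * a * beta * g * g * g) + (h * beta * (d * h - ((h * d))) * beta * g * gamma * beta * g * D * g * g) - (h * beta * (d * h - ((h * d))) * beta * g * gamma * beta * g * g * g) - (h * beta * (g * gamma - ((gamma * g) - (h * d * D * g) + (h * d * g))) * beta * D * g) - (h * beta * gamma * (g * beta - ((beta * g))) * D * g) - (h * beta * (gamma * beta - (- (beta * gamma) + (h * beta * d) - (h * beta * d * D))) * g * D * g) + (h * (beta * beta - (0)) * gamma * g * D * g) + (h * beta * (g * gamma - ((gamma * g) - (h * d * D * g) + (h * d *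 g))) * beta * g) + (h * beta * gamma * (g * beta - ((beta * g))) * g) - (h * (beta * h - (- (h * beta))) * a * beta * d * D * g * g * g) + (h * (beta * h - (- (h * beta))) * a * beta * g * g) + (h * (beta * h - (- (h * beta))) * beta * d * D * D * g * g) + (h * (beta * h - (- (h * beta))) * beta * d * D * g * D * g) + (h * (beta * h - (- (h * beta))) * beta * d * D * g * a * g * g) - (h * (beta * h - (- (h * beta))) * beta * d * D * g * g) - (h * (beta * h - (- (h * beta))) * beta * d * D * g * g) - (h * (beta * h - (- (h * beta))) * beta * d * D * g * g) - (h * beta * h * beta * (d * g - ((1))) * D * g) - (h * (beta * h - (- (h * beta))) * beta * D * g) - (h * (beta * h - (- (h * beta))) * beta * D * g) - (h * beta * h * beta * (d * g - ((1))) * a * g * g) - (h * (beta * h - (- (h * beta))) * beta * a * g * g) + (h * beta * h * beta * (d * g - ((1))) * g) + (h * beta * h * beta * (d * g - ((1))) * g) + (h * (beta * h - (- (h * beta))) * beta * g) + (h * (beta * h - (- (h * beta))) * beta * g) + (h * (beta * h - (- (h * beta))) * beta * g) + (h * beta * h * d * D * (g * beta - ((beta * g))) * D * g) + (h * (beta * h - (- (h * beta))) * d * D * beta * g * D * g) - (h * beta * h * d * D * (g * beta - ((beta * g))) * g) - (h * (beta * h - (- (h * beta))) * d * D * beta * g * g) - (h * (beta * h - (- (h * beta))) * d * a * beta * g * D * g * g) + (h * (beta * h - (- (h * beta))) * d * a * beta * g * g * g) + (h * (beta * h - (- (h * beta))) * d * beta * g * gamma * beta * g * D * g * g) - (h *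 (beta * h - (- (h * beta))) * d * beta * g * gamma * beta * g * g * g) - (h * beta * h * (d * g - ((1))) * beta * D * g) + (h * beta * h * (d * g - ((1))) * beta * g) + ((h * h - (0)) * beta * a * beta * d * D * g * g * g) - ((h * h - (0)) * beta * a * beta * g * g) + ((h * h - (0)) * beta * beta * D * g) + ((h * h - (0)) * beta * beta * D * g) + ((h * h - (0)) * beta * beta * a * g * g) - ((h * h - (0)) * beta * beta * d * D * D * g * g) - ((h * h - (0)) * beta * beta * d * D * g * D * g) - ((h * h - (0)) * beta * beta * d * D * g * a * g * g) + ((h * h - (0)) * beta * beta * d * D * g * g) + ((h * h - (0)) * beta * beta * d * D * g * g) + ((h * h - (0)) * beta * beta * d * D * g * g) - ((h * h - (0)) * beta * beta * g) - ((h * h - (0)) * beta * beta * g) - ((h * h - (0)) * beta * beta * g) - ((h * h - (0)) * beta * d * D * beta * g * D * g) + ((h * h - (0)) * beta * d * D * beta * g * g) + ((h * h - (0)) * beta * d * a * beta * g * D * g * g) - ((h * h - (0)) * beta * d * a * beta * g * g * g) - ((h * h - (0)) * beta * d * beta * g * gamma * beta * g * D * g * g) + ((h * h - (0)) * beta * d * beta * g * gamma * beta * g * g * g) by non_commutative_ring.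
  rewrite E ?z_DE ?z_ab ?z_ah ?z_bb ?z_bh ?z_ca ?z_cb ?z_ch ?z_da ?z_db ?z_dg ?z_dh ?z_ga ?z_gb ?z_gc ?z_gh ?z_hbaaV ?z_hh.
  by rewrite ?mulr0 ?mul0r ?oppr0 ?addr0 ?add0r ?subr0.
have Dc : D * gamma = gamma * D.
  apply/eqP; rewrite -subr_eq0; apply/eqP.
  have E : D * gamma - (gamma * D) = ((D - ((a * g) - (beta * g * gamma * g))) * gamma) - (gamma * (D - ((a * g) - (beta * g * gamma * g)))) + (a * (g * gamma - ((gamma * g) - (h * d * D * g) + (h * d * g)))) - ((a * h - ((h * a))) * d * D * g) + (a * h * (d * g - ((1)))) + ((a * h - ((h * a)))) - (beta * (g * gamma - ((gamma * g) - (h * d * D * g) + (h * d * g))) * g * gamma) - (beta * gamma * g * (g * gamma - ((gamma * g) - (h * d * D * g) + (h * d * g)))) - (beta * gamma * (g * gamma - ((gamma * g) - (h * d * D * g) + (h * d * g))) * g) - (beta * (gamma * gamma - ((h * gamma * d) - (h * gamma * d * D))) * g * g) - (beta * (gamma * gamma - ((h * gamma * d) - (h * gamma * d * D))) * g * g) + (beta * gamma * (g * h - ((h * g))) * d * D * g) - (beta * gamma * g * h * (d * g - ((1)))) - (beta * gamma * (g * h - ((h * g)))) + (beta * (gamma * h - (- (h * gamma))) * d * D * g * g) - (beta * gamma * h * (d * g - ((1))) * g) - (beta * (gamma * h - (- (h * gamma))) * g) - (beta * (gamma * h - (- (h * gamma))) * g) + (beta * gamma * h * (g * d - ((1))) *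 D * g) + (beta * (gamma * h - (- (h * gamma))) * D * g) - ((beta * h - (- (h * beta))) * gamma * D * g) - (beta * h * gamma * (d * g - ((1))) * g) - (beta * h * gamma * (d * g - ((1))) * g) + ((beta * h - (- (h * beta))) * d * D * g * g * gamma) - (beta * h * (d * g - ((1))) * g * gamma) - ((beta * h - (- (h * beta))) * g * gamma) - ((gamma * a - ((a * gamma) - (h * a * a) + (h * a * a * D^-1))) * g) + (gamma * beta * (g * gamma - ((gamma * g) - (h * d * D * g) + (h * d * g))) * g) + ((gamma * beta - (- (beta * gamma) + (h * beta * d) - (h * beta * d * D))) * gamma * g * g) + ((beta * h - (- (h * beta))) * gamma * d * D * g * g) - (gamma * (beta * h - (- (h * beta))) * d * D * g * g) + (gamma * beta * h * (d * g - ((1))) * g) + (gamma * (beta * h - (- (h * beta))) * g) + ((gamma * h - (- (h * gamma))) * beta * d * D * g * g) - ((gamma * h - (- (h * gamma))) * beta * g) - ((h * a * a * D^-1 - ((h * a * d) + (h * beta * gamma))) * g) - (h * a * d * (D - ((a * g) - (beta * g * gamma * g))) * g) - (h * a * (d * a - ((a * d) + (h * beta * d) - (h * beta * d * D))) * g * g) - (h * a * a * (d * g - ((1))) * g) + (h * a * (d * beta - ((beta * d))) * g * gamma * g * g) + (h * a * beta * (d * g - ((1))) * gamma * g * g) + (h * (a * beta - ((beta * a))) * gamma * g * g) - (h * a * (d * g - ((1)))) + (h * (a * h - ((h * a))) * beta * d * D * g * g) - (h * a * h * beta * (d * g - ((1))) * g) - (h * (a * h - ((h * a))) * beta * g) +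 (h * beta * gamma * (D - ((a * g) - (beta * g * gamma * g))) * g) + (h * beta * (gamma * a - ((a * gamma) - (h * a * a) + (h * a * a * D^-1))) * g * g) - (h * beta * gamma * beta * (g * gamma - ((gamma * g) - (h * d * D * g) + (h * d * g))) * g * g) - (h * beta * (gamma * beta - (- (beta * gamma) + (h * beta * d) - (h * beta * d * D))) * gamma * g * g * g) + (h * (beta * beta - (0)) * gamma * gamma * g * g * g) + (h * beta * gamma * (beta * h - (- (h * beta))) * d * D * g * g * g) - (h * beta * gamma * beta * h * (d * g - ((1))) * g * g) - (h * beta * gamma * (beta * h - (- (h * beta))) * g * g) - (h * beta * d * (D - ((a * g) - (beta * g * gamma * g))) * gamma * g * g) - (h * beta * d * (D - ((a * g) - (beta * g * gamma * g))) * gamma * g * g) - (h * beta * d * D * g * (g * gamma - ((gamma * g) - (h * d * D * g) + (h * d * g)))) - (h * beta * d * D * (g * gamma - ((gamma * g) - (h * d * D * g) + (h * d * g))) * g) + (h * beta * d * D * (g * h - ((h * g))) * d * D * g) - (h * beta * d * D * g * h * (d * g - ((1)))) - (h * beta * d * D * (g * h - ((h * g)))) + (h * beta * d * (D - ((a * g) - (beta * g * gamma * g))) * h * d * D * g * g) - (h * beta * d * D * h * (d * g - ((1))) * g) - (h * beta * d * (D - ((a * g) - (beta * g * gamma * g))) * h * g) - (h * beta * d * (D - ((a * g) - (beta * g * gamma * g))) * h * g) + (h * beta * d * D * h * (g * d - ((1))) * D * g) + (h * beta * d * (D - ((a * g) - (beta * g * gamma * g))) * h * D * g) - (h * beta *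 (d * a - ((a * d) + (h * beta * d) - (h * beta * d * D))) * g * gamma * g * g) - (h * beta * (d * a - ((a * d) + (h * beta * d) - (h * beta * d * D))) * g * gamma * g * g) - (h * beta * a * (d * g - ((1))) * gamma * g * g) - (h * beta * a * (d * g - ((1))) * gamma * g * g) + (h * beta * d * a * (g * h - ((h * g))) * D * g) + (h * beta * d * a * (g * h - ((h * g))) * d * D * g * g) - (h * beta * d * a * (g * h - ((h * g))) * g) - (h * beta * d * a * (g * h - ((h * g))) * g) + (h * beta * d * (a * h - ((h * a))) * g * D * g) + (h * beta * d * a * h * (g * d - ((1))) * D * g * g) + (h * beta * d * (a * h - ((h * a))) * D * g * g) - (h * beta * d * (a * h - ((h * a))) * g * g) - (h * beta * d * (a * h - ((h * a))) * g * g) + (h * beta * (d * beta - ((beta * d))) * g * gamma * g * gamma * g * g) + (h * beta * (d * beta - ((beta * d))) * g * gamma * g * gamma * g * g) + (h * (beta * beta - (0)) * d * g * gamma * g * gamma * g * g) + (h * (beta * beta - (0)) * d * g * gamma * g * gamma * g * g) - (h * beta * d * beta * g * gamma * (g * h - ((h * g))) * D * g) - (h * beta * d * beta * g * gamma * (g * h - ((h * g))) * d * D * g * g) + (h * beta * d * beta * g * gamma * (g * h - ((h * g))) * g) + (h * beta * d * beta * g * gamma * (g * h - ((h * g))) * g) - (h * beta * d * beta * g * (gamma * h - (- (h * gamma))) * g * D * g) - (h * beta * d * beta * g * gamma * h * (g * d - ((1))) * D * g * g) - (h * beta * d * beta * g * (gamma * h - (- (h * gamma))) * D * g * g) + (h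 * beta * d * beta * g * (gamma * h - (- (h * gamma))) * g * g) + (h * beta * d * beta * g * (gamma * h - (- (h * gamma))) * g * g) + (h * beta * d * beta * (g * h - ((h * g))) * gamma * D * g * g) + (h * beta * d * beta * (g * h - ((h * g))) * gamma * g * D * g) - (h * beta * d * beta * (g * h - ((h * g))) * gamma * g * g) - (h * beta * d * beta * (g * h - ((h * g))) * gamma * g * g) + (h * beta * d * (beta * h - (- (h * beta))) * g * gamma * D * g * g) + (h * beta * d * (beta * h - (- (h * beta))) * g * gamma * g * D * g) - (h * beta * d * (beta * h - (- (h * beta))) * g * gamma * g * g) - (h * beta * d * (beta * h - (- (h * beta))) * g * gamma * g * g) + (h * beta * (d * gamma - ((gamma * d) - (h * d * d) + (h * d * d * D))) * g * g) + (h * beta * gamma * (d * g - ((1))) * g) + (h * beta * (d * h - ((h * d))) * a * D * g * g) + (h * beta * (d * h - ((h * d))) * a * g * D * g) - (h * beta * (d * h - ((h * d))) * a * g * g) - (h * beta * (d * h - ((h * d))) * a * g * g) - (h * beta * (d * h - ((h * d))) * beta * g * gamma * D * g * g) - (h * beta * (d * h - ((h * d))) * beta * g * gamma * g * D * g) + (h * beta * (d * h - ((h * d))) * beta * g * gamma * g * g) + (h * beta * (d * h - ((h * d))) * beta * g * gamma * g * g) + (h * beta * (g * gamma - ((gamma * g) - (h * d * D * g) + (h * d * g)))) + (h * (beta * h - (- (h * beta))) * beta * d * D * g * gamma * g * g) + (h * (beta * h - (- (h * beta))) * beta * d * D * g * gamma * g * g) - (h * beta * h * beta * (d * g - ((1)))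 * gamma * g * g) - (h * beta * h * beta * (d * g - ((1))) * gamma * g * g) - (h * (beta * h - (- (h * beta))) * beta * gamma * g * g) - (h * (beta * h - (- (h * beta))) * beta * gamma * g * g) - (h * (beta * h - (- (h * beta))) * d * D * g) + (h * (beta * h - (- (h * beta))) * d * a * D * g * g) + (h * (beta * h - (- (h * beta))) * d * a * g * D * g) - (h * (beta * h - (- (h * beta))) * d * a * g * g) - (h * (beta * h - (- (h * beta))) * d * a * g * g) - (h * (beta * h - (- (h * beta))) * d * beta * g * gamma * D * g * g) - (h * (beta * h - (- (h * beta))) * d * beta * g * gamma * g * D * g) + (h * (beta * h - (- (h * beta))) * d * beta * g * gamma * g * g) + (h * (beta * h - (- (h * beta))) * d * beta * g * gamma * g * g) + (h * (beta * h - (- (h * beta))) * d * d * D * g * g) - (h * beta * h * d * (d * g - ((1))) * g) - (h * (gamma * beta - (- (beta * gamma) + (h * beta * d) - (h * beta * d * D))) * d * D * g * g) - (h * beta * (gamma * h - (- (h * gamma))) * beta * d * D * g * g * g) + (h * beta * (gamma * h - (- (h * gamma))) * beta * g * g) + (h * (beta * h - (- (h * beta))) * a * a * D^-1 * g * g) - (h * (beta * h - (- (h * beta))) * a * a * g * g) + (h * (beta * h - (- (h * beta))) * beta * d * D * gamma * g * g * g) - (h * (beta * h - (- (h * beta))) * beta * d * gamma * g * g * g) + (h * (beta * h - (- (h * beta))) * gamma * beta * d * D * g * g * g) - (h * (beta * h - (- (h * beta))) * gamma * beta * g * g) + (h * (gamma * beta - (- (beta * gamma) + (h * beta * d) - (h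 * beta * d * D))) * g) + ((h * h - (0)) * a * beta * d * D * g * g) - ((h * h - (0)) * a * beta * g) - ((h * h - (0)) * beta * a * a * D^-1 * g * g) + ((h * h - (0)) * beta * a * a * g * g) + ((h * h - (0)) * beta * beta * gamma * g * g) + ((h * h - (0)) * beta * beta * gamma * g * g) - ((h * h - (0)) * beta * beta * d * D * gamma * g * g * g) - ((h * h - (0)) * beta * beta * d * D * g * gamma * g * g) - ((h * h - (0)) * beta * beta * d * D * g * gamma * g * g) + ((h * h - (0)) * beta * beta * d * gamma * g * g * g) - ((h * h - (0)) * beta * gamma * beta * d * D * g * g * g) + ((h * h - (0)) * beta * gamma * beta * g * g) + ((h * h - (0)) * beta * d * D * d * D * g * g) - ((h * h - (0)) * beta * d * a * D * g * g) - ((h * h - (0)) * beta * d * a * g * D * g) + ((h * h - (0)) * beta * d * a * g * g) + ((h * h - (0)) * beta * d * a * g * g) + ((h * h - (0)) * beta * d * beta * g * gamma * D * g * g) + ((h * h - (0)) * beta * d * beta * g * gamma * g * D * g) - ((h * h - (0)) * beta * d * beta * g * gamma * g * g) - ((h * h - (0)) * beta * d * beta * g * gamma * g * g) - ((h * h - (0)) * beta * d * d * D * g * g) - ((h * h - (0)) * beta * d * d * D * g * g) + ((h * h - (0)) * beta * d * g) by non_commutative_ring.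
  rewrite E ?z_DE ?z_ab ?z_ah ?z_bb ?z_bh ?z_ca ?z_cb ?z_cc ?z_ch ?z_da ?z_db ?z_dc ?z_dg ?z_dh ?z_gc ?z_gd ?z_gh ?z_haaV ?z_hh.
  by rewrite ?mulr0 ?mul0r ?oppr0 ?addr0 ?add0r ?subr0.
by split.
Qed.

Theorem mainTheorem1 (K : fieldType) (R : unitAlgType K)
    (charK : [pchar K] =i pred0) (h a beta gamma d : R) :
  GLh11_rel h a beta gamma d ->
  let D := qsdet a beta gamma d in
  [/\ D * a = a * D, D * beta = beta * D,
      D * gamma = gamma * D & D * d = d * D].
Proof.
case=> [[ua ud uD] [hh ha hd hb hc] [ab ac db dc ad] [bb cc bc]] /=.
exact (@key R h a beta gamma d d^-1 (qsdet a beta gamma d) uD (mulVr ud) (mulrV ud) (erefl _) hh ha hd hb hc ab ac db dc ad bb cc bc).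
Qed.
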